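(* Let $k\in\omega\setminus\{0,1\}$, let $\psi$ be a bounded complexity measure and let $T\in\mathcal M_k^\infty\setminus\mathcal M_k^{\infty c}$. Then $\psi^a(T)=\max\{M_\psi(T,\bar\delta):\bar\delta\in\Delta(T)\}$.
   Context: Notation: $\omega=\{0,1,2,\dots\}$; $\mathcal P(\omega)$ is the set of nonempty finite subsets of $\omega$; for $k\in\omega\setminus\{0,1\}$, $E_k=\{0,1,\dots,k-1\}$. $P=\{f_i:i\in\omega\}$ is a set of attributes, $f_i\neq f_j$ for $i\ne j$. Decision tables: $\mathcal M_k^\infty$ is the set of rectangular tables filled with numbers from $E_k$, whose columns are labeled with pairwise different attributes from $P$, whose rows are pairwise different, and each row of which is labeled with a set from $\mathcal P(\omega)$ (its set of decisions). The empty table (no rows) is denoted $\Lambda$ and belongs to $\mathcal M_k^\infty$. For $T\in\mathcal M_k^\infty$: $\Delta(T)$ is the set of rows; $\Pi(T)$ is the intersection of the decision sets of all rows (common decisions); $\mathcal M_k^{\infty c}$ is the set of tables having at least one common decision, and $\Lambda\in\mathcal M_k^{\infty c}$; $\mathrm{At}(T)$ is the set of attributes labeling columns. For nonempty $T$ and a word $\alpha=(f_{i_1},\delta_1)\cdots(f_{i_m},\delta_m)$ with $f_{i_j}\in\mathrm{At}(T)$, $\delta_j\in E_k$, $T\alpha$ is the subtable of $T$ consisting of the rows having value $\delta_j$ in the column $f_{i_j}$ for all $j$; for the empty word $\lambda$, $T\lambda=T$. Decision trees: a $k$-decision tree is a finite directed rooted tree with at least two nodes in which the root and the edges leaving the root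 are unlabeled, each terminal node is labeled with a decision from $\omega$, and each other node is labeled with an attribute from $P$, each edge leaving such a node being labeled with a number from $E_k$. $\mathrm{At}(\Gamma)$ is the set of attributes labeling nodes of $\Gamma$. For a complete path $\tau=v_1,d_1,\dots,v_m,d_m,v_{m+1}$ (from the root to a terminal node), $\pi(\tau)=\lambda$ if $m=1$, and otherwise $\pi(\tau)=(f_{i_2},\delta_2)\cdots(f_{i_m},\delta_m)$ where $v_j$ is labeled $f_{i_j}$ and $d_j$ is labeled $\delta_j$; $T(\tau)=T\pi(\tau)$. For $T\ne\Lambda$, a nondeterministic decision tree for $T$ is a $k$-decision tree $\Gamma$ with $\mathrm{At}(\Gamma)\subseteq\mathrm{At}(T)$ such that every row of $T$ belongs to $T(\tau)$ for some complete path $\tau$, and for every complete path $\tau$ either $T(\tau)=\Lambda$ or the decision at the terminal node of $\tau$ belongs to $\Pi(T(\tau))$. Complexity measures: a partially bounded complexity measure is a function $\psi:P^*\to\omega$ on finite words over $P$ such that for all words $\alpha_1,\alpha_2$: $\psi(\alpha_1)=0$ iff $\alpha_1=\lambda$; $\psi(\alpha_1)$ is invariant under permutation of letters; $\psi(\alpha_1)\le\psi(\alpha_1\alpha_2)$; $\psi(\alpha_1\alpha_2)\le\psi(\alpha_1)+\psi(\alpha_2)$. It is bounded if in addition $\psi(\alpha)\ge|\alpha|$ for all $\alpha$. $\psi$ is extended to words $(f_{i_1},\delta_1)\cdots(f_{i_m},\delta_m)$ by $\psi(f_{i_1}\cdots f_{i_m})$ ($\psi(\lambda)=0$). For a $k$-decision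 tree $\Gamma$, $\psi(\Gamma)=\max_\tau\psi(\pi(\tau))$ over complete paths. For $T\ne\Lambda$, $\psi^a(T)$ is the minimum of $\psi(\Gamma)$ over nondeterministic decision trees $\Gamma$ for $T$. $M_\psi(T,\bar\delta)$: let $T\notin\mathcal M_k^{\infty c}$ have columns labeled $f_{t_1},\dots,f_{t_n}$ (in this order). For $\bar\delta=(\delta_1,\dots,\delta_n)\in E_k^n$, $M_\psi(T,\bar\delta)$ is the minimum number $p\in\omega$ for which there exist attributes $f_{t_{i_1}},\dots,f_{t_{i_m}}\in\mathrm{At}(T)$ ($m\ge0$) such that $T(f_{t_{i_1}},\delta_{i_1})\cdots(f_{t_{i_m}},\delta_{i_m})\in\mathcal M_k^{\infty c}$ and $\psi(f_{t_{i_1}}\cdots f_{t_{i_m}})=p$. *)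

(* Defs.v *)
From mathcomp Require Import all_boot.
From Stdlib Require Import ClassicalEpsilon.
Set Implicit Arguments. Unset Strict Implicit. Unset Printing Implicit Defensive.

(* Attributes f_i are identified with their index i : nat; decisions are nats. *)

Definition is_least (P : nat -> Prop) (m : nat) : Prop :=
  P m /\ forall n, P n -> m <= n.

(* nat_min P = the minimum of P when P is nonempty (unspecified otherwise). *)
Definition nat_min (P : nat -> Prop) : nat :=
  epsilon (inhabits 0) (is_least P).

Definition partially_bounded_measure (psi : seq nat -> nat) : Prop :=
  [/\ (forall a, psi a = 0 <-> a = [::]),
      (forall a b, perm_eq a b -> psi a = psi b),
      (forall a b, psi a <= psi (a ++ b)) &
      (forall a b, psi (a ++ b) <= psi a + psi b)].

Definition bounded_measure (psi : seq nat -> nat) : Prop :=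
  partially_bounded_measure psi /\ forall a, size a <= psi a.

(* extension of psi to words (f_i1,d1)...(f_im,dm) *)
Definition psiw (psi : seq nat -> nat) (w : seq (nat * nat)) : nat :=
  psi (map fst w).

(* cols: attribute labels of the columns (in order);
   rows: (tuple of values, set of decisions as a nonempty list). *)
Record table := Table { cols : seq nat; rows : seq (seq nat * seq nat) }.

(* T belongs to M_k^infty *)
Definition table_wf (k : nat) (T : table) : Prop :=
  [/\ uniq (cols T),
      uniq (map fst (rows T)) &
      forall r, r \in rows T ->
        [/\ size r.1 = size (cols T), all (fun v => v < k) r.1 & r.2 != [::]]].

Definition Delta (T : table) : seq (seq nat) := map fst (rows T).

Definition in_Pi (T : table) (d : nat) : Prop :=
  forall r, r \in rows T -> d \in r.2.

(* T in M_k^{infty c} (the empty table Lambda included) *)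
Definition has_common (T : table) : Prop :=
  rows T = [::] \/ exists d, in_Pi T d.

Definition rval (T : table) (r : seq nat) (a : nat) : nat :=
  nth 0 r (index a (cols T)).

Definition subtable (T : table) (alpha : seq (nat * nat)) : table :=
  Table (cols T)
    [seq r <- rows T | all (fun p => rval T r.1 p.1 == p.2) alpha].

(* A non-root node: terminal (decision) or attribute-labeled with labeled edges. *)
Inductive dnode :=
  | Leaf of nat
  | Node of nat & seq (nat * dnode).

(* A tree is given by the (unlabeled) list of subtrees hanging from the root. *)
Definition dtree := seq dnode.

Fixpoint node_wf (k : nat) (atts : seq nat) (t : dnode) : bool :=
  match t with
  | Leaf _ => true
  | Node a ch =>
      [&& a \in atts, 0 < size ch &
        (fix go (l : seq (nat * dnode)) : bool :=
           match l with
           | [::] => true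
           | (d, c) :: l' => [&& d < k, node_wf k atts c & go l']
           end) ch]
  end.

Definition tree_wf (k : nat) (atts : seq nat) (G : dtree) : bool :=
  (0 < size G) && all (node_wf k atts) G.

(* complete paths below a non-root node: (pi(tau), terminal decision) *)
Fixpoint node_paths (t : dnode) : seq (seq (nat * nat) * nat) :=
  match t with
  | Leaf d => [:: ([::], d)]
  | Node a ch =>
      (fix go (l : seq (nat * dnode)) :=
         match l with
         | [::] => [::]
         | (d, c) :: l' =>
             map (fun p => ((a, d) :: p.1, p.2)) (node_paths c) ++ go l'
         end) ch
  end.

Definition tree_paths (G : dtree) : seq (seq (nat * nat) * nat) :=
  flatten (map node_paths G).

Definition psi_tree (psi : seq nat -> nat) (G : dtree) : nat :=
  \max_(p <- tree_paths G) psiw psi p.1.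

Definition nondet_tree (k : nat) (T : table) (G : dtree) : Prop :=
  [/\ tree_wf k (cols T) G,
      (forall r, r \in Delta T ->
         exists2 p, p \in tree_paths G & r \in Delta (subtable T p.1)) &
      (forall p, p \in tree_paths G ->
         rows (subtable T p.1) = [::] \/ in_Pi (subtable T p.1) p.2)].

Definition psi_a (k : nat) (psi : seq nat -> nat) (T : table) : nat :=
  nat_min (fun q => exists G, nondet_tree k T G /\ psi_tree psi G = q).

(* M_psi(T, delta): indices ix (0-based) select columns t_{i_1},...,t_{i_m} *)
Definition M_psi (psi : seq nat -> nat) (T : table) (delta : seq nat) : nat :=
  nat_min (fun q => exists ix : seq nat,
    [/\ all (fun i => i < size (cols T)) ix,
        has_common (subtable T [seq (nth 0 (cols T) i, nth 0 delta i) | i <- ix]) &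
        psi [seq nth 0 (cols T) i | i <- ix] = q]).

(* Main.v *)
Require Import Defs.
From mathcomp Require Import all_boot.
From Stdlib Require Import ClassicalEpsilon Classical.
Set Implicit Arguments. Unset Strict Implicit. Unset Printing Implicit Defensive.

Lemma ex_least (P : nat -> Prop) n : P n -> exists m, is_least P m.
Proof.
elim: n {-2}n (leqnn n) => [|N IH] n Hn Pn.
  exists n; split => // m _; by move: Hn; rewrite leqn0 => /eqP->.
case: (classic (exists m, m < n /\ P m)) => [[m [Hm Pm]]|H].
  apply: (IH m) => //; rewrite -ltnS; exact: leq_trans Hm Hn.
exists n; split => // m Pm; rewrite leqNgt; apply/negP => Hm; apply: H; by exists m.
Qed.

Lemma nat_min_spec (P : nat -> Prop) n : P n -> is_least P (nat_min P).
Proof. move=> Pn; apply: epsilon_spec; exact: ex_least Pn. Qed.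

Fixpoint dnode_ind' (P : dnode -> Prop) (HL : forall d, P (Leaf d))
  (HN : forall a ch, (forall x, List.In x ch -> P x.2) -> P (Node a ch)) (t : dnode) : P t :=
  match t with
  | Leaf d => HL d
  | Node a ch => HN a ch ((fix go (l : seq (nat*dnode)) : forall x, List.In x l -> P x.2 :=
       match l with
       | [::] => fun x H => match H with end
       | (d0, c) :: l' => fun x H => match H with
              | or_introl E => eq_ind (d0, c) (fun z => P z.2) (dnode_ind' HL HN c) x E
              | or_intror H' => go l' x H' end
       end) ch)
  end.

Lemma wf_paths k atts t : node_wf k atts t ->
  forall p, p \in node_paths t -> all (fun q => q.1 \in atts) p.1.
Proof.
elim/dnode_ind': t => [d|a ch IH] /=.
  by move=> _ p; rewrite inE => /eqP->.
case/and3P => Ha _.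
elim: ch IH => [|[d c] l IHl] IH //= /and3P [_ Hc Hl] p.
rewrite mem_cat => /orP [/mapP [p' Hp' ->]|Hp].
  by rewrite /= Ha /=; apply: (IH (d, c)) => //; left.
by apply: IHl => // x Hx; apply: IH; right.
Qed.

Lemma tree_wf_paths k atts (G : dtree) : all (node_wf k atts) G ->
  forall p, p \in tree_paths G -> all (fun q => q.1 \in atts) p.1.
Proof.
rewrite /tree_paths; elim: G => [|t G IH] //= /andP [Ht HG] p.
rewrite mem_cat => /orP [Hp|Hp]; [exact: wf_paths Ht p Hp | exact: IH].
Qed.

Fixpoint chain (w : seq (nat*nat)) (d : nat) : dnode :=
  match w with [::] => Leaf d | (a, v) :: w' => Node a [:: (v, chain w' d)] end.

Lemma chain_paths w d : node_paths (chain w d) = [:: (w, d)].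
Proof. elim: w => [|[a v] w IH] //=; by rewrite IH. Qed.

Lemma chain_wf k atts w d : all (fun q => (q.1 \in atts) && (q.2 < k)) w -> node_wf k atts (chain w d).
Proof. elim: w => [|[a v] w IH] //= /andP [/andP [-> ->] /IH ->]. by []. Qed.

Lemma uniq_fst (A B : eqType) (s : seq (A * B)) r r0 :
  uniq (map fst s) -> r \in s -> r0 \in s -> r.1 = r0.1 -> r = r0.
Proof.
elim: s => [|x s IH] //= /andP [Hx Hu]; rewrite !inE => /orP [/eqP->|Hr] /orP [/eqP->|Hr0] E //.
- by move: Hx; rewrite E; case/negP; apply: map_f.
- by move: Hx; rewrite -E; case/negP; apply: map_f.
- exact: IH.
Qed.

Theorem lemma6 (k : nat) (psi : seq nat -> nat) (T : table) :
  2 <= k -> bounded_measure psi -> table_wf k T -> ~ has_common T ->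
  psi_a k psi T = \max_(d <- Delta T) M_psi psi T d.
Proof.
move=> _ _ [Hcu Hru Hrw] HnT.
set C := cols T.
pose word (delta : seq nat) ix := [seq (nth 0 C i, nth 0 delta i) | i <- ix].
pose cond delta ix := [/\ all (fun i => i < size C) ix,
        has_common (subtable T (word delta ix)) &
        psi [seq nth 0 C i | i <- ix] = M_psi psi T delta].
have rvalE : forall r i, i < size C -> rval T r (nth 0 C i) = nth 0 r i.
  by move=> r i Hi; rewrite /rval index_uniq.
have Mex : forall delta, delta \in Delta T -> exists ix, cond delta ix.
  move=> delta /mapP [r0 Hr0 Ed].
  have Hfull : exists ix, [/\ all (fun i => i < size C) ix,
        has_common (subtable T (word delta ix)) &
        psi [seq nth 0 C i | i <- ix] = psi [seq nth 0 C i | i <- iota 0 (size C)]].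
    exists (iota 0 (size C)); split => //.
      by apply/allP => i; rewrite mem_iota.
    case: (Hrw _ Hr0) => _ _; case E0: r0.2 => [//|d0 D0] _.
    right; exists d0 => r /=; rewrite mem_filter => /andP [Hall Hr].
    have -> : r = r0.
      apply: (uniq_fst Hru) => //; rewrite -Ed.
      case: (Hrw _ Hr) => Hs _ _; case: (Hrw _ Hr0) => Hs0 _ _.
      apply: (@eq_from_nth _ 0); first by rewrite Hs Ed Hs0.
      move=> i; rewrite Hs => Hi.
      have := allP Hall (nth 0 C i, nth 0 delta i).
      rewrite /word (map_f (fun i => (nth 0 C i, nth 0 delta i))) ?mem_iota //= => /(_ isT).
      by rewrite rvalE // => /eqP.
    by rewrite E0 in_cons eqxx.
  move: (nat_min_spec (n := psi [seq nth 0 C i | i <- iota 0 (size C)]) (P := fun q => exists ix, [/\ all (fun i => i < size C) ix, has_common (subtable T (word delta ix)) & psi [seq nth 0 C i | i <- ix] = q]) Hfull) => [[ix' [Hix' Hc' Hp']] _].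
  exists ix'; split => //; exact: Hp'.
pose ixf delta := epsilon (inhabits [::]) (cond delta).
have ixfP : forall delta, delta \in Delta T -> cond delta (ixf delta).
  by move=> delta Hd; apply: epsilon_spec; apply: Mex.
pose decf delta := epsilon (inhabits 0) (in_Pi (subtable T (word delta (ixf delta)))).
pose G : dtree := map (fun delta => chain (word delta (ixf delta)) (decf delta)) (Delta T).
have GpE : tree_paths G = map (fun delta => (word delta (ixf delta), decf delta)) (Delta T).
  rewrite /tree_paths /G -map_comp.
  elim: (Delta T) => [|x s IH] //=; by rewrite chain_paths IH.
have rowsT : rows T != [::] by apply/eqP => E; apply: HnT; left.
have HG : nondet_tree k T G.
  split.
  - apply/andP; split; first by rewrite /G /Delta !size_map lt0n size_eq0.
    rewrite all_map; apply/allP => delta Hd /=; apply: chain_wf.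
    have [Hix _ _] := ixfP _ Hd.
    move: Hd => /mapP [r Hr Ed].
    case: (Hrw _ Hr) => Hs Hk _.
    apply/allP => q /mapP [i Hi ->] /=.
    have Hi' := allP Hix _ Hi.
    rewrite mem_nth //=; apply: (allP Hk); rewrite Ed mem_nth // Hs //.
  - move=> delta Hd; exists (word delta (ixf delta), decf delta).
      by rewrite GpE; apply: (map_f (fun delta => (word delta (ixf delta), decf delta))).
    have [Hix _ _] := ixfP _ Hd.
    move: Hd => /mapP [r Hr Ed].
    rewrite /Delta /=; apply/mapP; exists r => //.
    rewrite mem_filter Hr andbT; apply/allP => q /mapP [i Hi ->] /=.
    by rewrite rvalE ?Ed // (allP Hix).
  - move=> p; rewrite GpE => /mapP [delta Hd ->] /=.
    have [_ [H|[d Hd']] _] := ixfP _ Hd; first by left.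
    right; apply: epsilon_spec; by exists d.
have HGle : psi_tree psi G <= \max_(d <- Delta T) M_psi psi T d.
  rewrite /psi_tree; apply/bigmax_leqP_seq => p; rewrite GpE => /mapP [delta Hd ->] _.
  have [_ _ Hp] := ixfP _ Hd.
  rewrite /psiw /= /word -map_comp /comp /= Hp.
  exact: (leq_bigmax_seq (F := M_psi psi T)).
have Hlow : forall G0, nondet_tree k T G0 -> \max_(d <- Delta T) M_psi psi T d <= psi_tree psi G0.
  move=> G0 [Hwf Hcov Hpath]; apply/bigmax_leqP_seq => delta Hd _.
  have [p Hp Hdp] := Hcov _ Hd.
  have Hatt : all (fun q => q.1 \in C) p.1.
    exact: (tree_wf_paths (proj2 (andP Hwf))).
  move: Hdp => /mapP [r Hr Ed].
  move: Hr; rewrite mem_filter => /andP [Hall Hr].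
  pose ix := map (fun q => index q.1 C) p.1.
  have Hw : word delta ix = p.1.
    rewrite /word /ix -map_comp -[RHS]map_id; apply/eq_in_map => -[a v] Hq /=.
    have Ha : a \in C := allP Hatt _ Hq.
    rewrite nth_index //; congr (_, _).
    by have /eqP := allP Hall _ Hq; rewrite /rval /= -Ed.
  have Hle : M_psi psi T delta <= psi [seq nth 0 C i | i <- ix].
    pose P0 := fun q => exists ix, [/\ all (fun i => i < size C) ix, has_common (subtable T (word delta ix)) & psi [seq nth 0 C i | i <- ix] = q].
    have HP : P0 (psi [seq nth 0 C i | i <- ix]).
      exists ix; split => //.
        apply/allP => i /mapP [q Hq ->]; rewrite index_mem; exact: (allP Hatt).
      rewrite Hw; case: (Hpath _ Hp) => [E|H]; last by right; exists p.2.
      have : r \in rows (subtable T p.1) by rewrite /= mem_filter Hall Hr.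
      by rewrite E.
    exact: (proj2 (nat_min_spec HP) _ HP).
  apply: (leq_trans Hle); rewrite /psi_tree.
  have -> : [seq nth 0 C i | i <- ix] = map fst p.1.
    by have := congr1 (map fst) Hw; rewrite /word -map_comp => <-.
  exact: (leq_bigmax_seq (F := fun p => psiw psi p.1)).
have := nat_min_spec (n := psi_tree psi G) (P := fun q => exists G, nondet_tree k T G /\ psi_tree psi G = q) (ex_intro _ G (conj HG erefl)).
move=> [[G0 [HG0 E0]] Hl].
rewrite /psi_a; apply/eqP; rewrite eqn_leq; apply/andP; split.
  apply: leq_trans HGle; apply: Hl; by exists G.
by rewrite -E0; apply: Hlow.
Qed.
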